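(* Let $\mathbf{B} \equiv \lambda xyz.\, x(yz)$, $\mathbf{S} \equiv \lambda xyz.\, xz(yz)$, and let $Y_0 \equiv \lambda f.\, \omega_f\omega_f$ with $\omega_f \equiv \lambda x.\, f(xx)$ (Curry's fixed point combinator). Then $\mathbf{B}Y_0 \neq_\beta \mathbf{B}Y_0\mathbf{S}$.
   Context: Terms of the untyped $\lambda$-calculus modulo $\alpha$-conversion; $=_\beta$ is $\beta$-convertibility; application associates to the left. *)

(* Defs.v *)
(* Untyped lambda calculus with de Bruijn indices
   (de Bruijn terms = lambda terms modulo alpha-conversion). *)
From Stdlib Require Import Arith Relations.

Inductive term : Type :=
| Var : nat -> term
| App : term -> term -> term
| Lam : term -> term.

Fixpoint lift (d c : nat) (t : term) : term :=
  match t with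
  | Var n => if n <? c then Var n else Var (n + d)
  | App a b => App (lift d c a) (lift d c b)
  | Lam a => Lam (lift d (S c) a)
  end.

Fixpoint subst (k : nat) (u : term) (t : term) : term :=
  match t with
  | Var n => if n <? k then Var n
             else if n =? k then lift k 0 u
             else Var (n - 1)
  | App a b => App (subst k u a) (subst k u b)
  | Lam a => Lam (subst (S k) u a)
  end.

Inductive beta : term -> term -> Prop :=
| beta_redex : forall t u, beta (App (Lam t) u) (subst 0 u t)
| beta_appl : forall a a' b, beta a a' -> beta (App a b) (App a' b)
| beta_appr : forall a b b', beta b b' -> beta (App a b) (App a b')
| beta_lam : forall a a', beta a a' -> beta (Lam a) (Lam a').

Definition beta_conv : term -> term -> Prop := clos_refl_sym_trans term beta.

(* B = \x y z. x (y z) *)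
Definition Bc : term := Lam (Lam (Lam (App (Var 2) (App (Var 1) (Var 0))))).
(* S = \x y z. x z (y z) *)
Definition Sc : term :=
  Lam (Lam (Lam (App (App (Var 2) (Var 0)) (App (Var 1) (Var 0))))).
(* omega_f = \x. f (x x), with f bound by the enclosing lambda *)
Definition omega_f : term := Lam (App (Var 1) (App (Var 0) (Var 0))).
Definition Y0 : term := Lam (App omega_f omega_f).

(* Main.v *)
Require Import Defs.
From Stdlib Require Import Arith Lia Relations.

Ltac vcase := repeat match goal with
  | |- context [?a <? ?b] => destruct (Nat.ltb_spec a b)
  | |- context [?a =? ?b] => destruct (Nat.eqb_spec a b)
  end.

Lemma lift_0 : forall t c, lift 0 c t = t.
Proof. induction t; intros; simpl; try (f_equal; auto; fail).
  vcase; f_equal; lia. Qed.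

Lemma simpl_lift : forall M k n i p, i <= k + n -> k <= i ->
  lift p i (lift n k M) = lift (p + n) k M.
Proof. induction M; intros; simpl.
 - vcase; simpl; vcase; f_equal; lia.
 - f_equal; auto.
 - f_equal; apply IHM; lia. Qed.

Lemma permute_lift : forall M i k p n, i <= k ->
  lift n (p + k) (lift p i M) = lift p i (lift n k M).
Proof. induction M; intros; simpl.
 - vcase; simpl; vcase; f_equal; lia.
 - f_equal; auto.
 - f_equal. replace (S (p + k)) with (p + S k) by lia. apply IHM; lia. Qed.

Lemma simpl_subst : forall M N k n i, i <= k + n -> k <= i ->
  subst i N (lift (S n) k M) = lift n k M.
Proof. induction M; intros; simpl.
 - vcase; simpl; vcase; f_equal; lia.
 - f_equal; auto.
 - f_equal; apply IHM; lia. Qed.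

Lemma commut_lift_subst_rec : forall M N k p d, k <= p ->
  lift d k (subst p N M) = subst (d + p) N (lift d k M).
Proof. induction M as [m|M1 IH1 M2 IH2|M IHM]; intros; simpl.
 - vcase; simpl; vcase; try (f_equal; lia).
   apply simpl_lift; lia.
 - f_equal; auto.
 - f_equal. replace (S (d + p)) with (d + S p) by lia. apply IHM; lia. Qed.

Lemma commut_lift_subst : forall M N p k d,
  lift d (p + k) (subst p N M) = subst p (lift d k N) (lift d (S (p + k)) M).
Proof. induction M as [m|M1 IH1 M2 IH2|M IHM]; intros; simpl.
 - vcase; simpl; vcase; try (f_equal; lia).
   replace (p + k) with (p + k) by lia. apply permute_lift; lia.
 - f_equal; auto.
 - f_equal. apply (IHM N (S p) k d). Qed.

Lemma distr_subst : forall M N P p q,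
  subst (p + q) P (subst p N M) = subst p (subst q P N) (subst (S (p + q)) P M).
Proof. induction M as [m|M1 IH1 M2 IH2|M IHM]; intros; simpl.
 - vcase; simpl; vcase; try (f_equal; lia).
   all: subst; try (symmetry; apply simpl_subst; lia); try (apply simpl_subst; lia).
   all: try (rewrite commut_lift_subst_rec by lia; f_equal; lia).
   all: try (symmetry; rewrite commut_lift_subst_rec by lia; f_equal; lia).
 - f_equal; auto.
 - f_equal. apply (IHM N P (S p) q). Qed.

Inductive par : term -> term -> Prop :=
| par_var n : par (Var n) (Var n)
| par_app a a' b b' : par a a' -> par b b' -> par (App a b) (App a' b')
| par_lam a a' : par a a' -> par (Lam a) (Lam a')
| par_red a a' b b' : par a a' -> par b b' -> par (App (Lam a) b) (subst 0 b' a').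

Lemma par_refl : forall t, par t t.
Proof. induction t; constructor; auto. Qed.

Lemma par_lift : forall t t', par t t' -> forall d c, par (lift d c t) (lift d c t').
Proof. induction 1; intros; simpl; try (constructor; auto; fail).
  - apply par_refl.
  - pose proof (commut_lift_subst a' b' 0 c d) as E. simpl in E. rewrite E. constructor; auto. Qed.

Lemma par_subst : forall t t', par t t' -> forall u u' k, par u u' ->
  par (subst k u t) (subst k u' t').
Proof. induction 1; intros; simpl; try (constructor; auto; fail).
  - vcase; try apply par_refl. apply par_lift; auto.
  - pose proof (distr_subst a' b' u' 0 k) as E. simpl in E. rewrite E. constructor; auto. Qed.

Lemma par_diamond : forall t t1, par t t1 -> forall t2, par t t2 ->
  exists t3, par t1 t3 /\ par t2 t3.
Proof.
  induction 1 as [n|a a1 b b1 Ha IHa Hb IHb|a a1 Ha IHa|a a1 b b1 Ha IHa Hb IHb];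
    intros t2 H2.
  - inversion H2; subst. exists (Var n); split; constructor.
  - inversion H2 as [|? a2 ? b2 Ha2 Hb2|?|a0 a2 ? b2 Ha2 Hb2]; subst.
    + destruct (IHa _ Ha2) as [x [? ?]]. destruct (IHb _ Hb2) as [y [? ?]].
      exists (App x y); split; constructor; auto.
    + destruct (IHa (Lam a2)) as [x [Hx1 Hx2]]. constructor; auto.
      destruct (IHb _ Hb2) as [y [? ?]].
      inversion Ha; subst. inversion Hx1; subst. inversion Hx2; subst.
      exists (subst 0 y a'0); split.
      * constructor; eauto.
      * apply par_subst; eauto.
  - inversion H2; subst. destruct (IHa _ H0) as [x [? ?]].
    exists (Lam x); split; constructor; auto.
  - inversion H2 as [|? a2 ? b2 Ha2 Hb2|?|a0 a2 ? b2 Ha2 Hb2]; subst.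
    + inversion Ha2; subst.
      destruct (IHa _ H0) as [x [? ?]]. destruct (IHb _ Hb2) as [y [? ?]].
      exists (subst 0 y x); split.
      * apply par_subst; auto.
      * constructor; auto.
    + destruct (IHa _ Ha2) as [x [? ?]]. destruct (IHb _ Hb2) as [y [? ?]].
      exists (subst 0 y x); split; apply par_subst; auto.
Qed.

Inductive star (R : term -> term -> Prop) : term -> term -> Prop :=
| star_refl x : star R x x
| star_step x y z : R x y -> star R y z -> star R x z.

Lemma star_trans R : forall x y z, star R x y -> star R y z -> star R x z.
Proof. induction 1; intros; auto. econstructor; eauto. Qed.

Lemma strip : forall t t1, par t t1 -> forall t2, star par t t2 ->
  exists t3, star par t1 t3 /\ par t2 t3.
Proof. intros t t1 H t2 H2. revert t1 H. induction H2; intros.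
  - exists t1; split; [constructor | auto].
  - destruct (par_diamond _ _ H _ H0) as [u [Hu1 Hu2]].
    destruct (IHstar _ Hu1) as [v [? ?]].
    exists v; split; auto. econstructor; eauto. Qed.

Lemma par_confl : forall t t1, star par t t1 -> forall t2, star par t t2 ->
  exists t3, star par t1 t3 /\ star par t2 t3.
Proof. induction 1; intros.
  - exists t2; split; [auto | constructor].
  - destruct (strip _ _ H _ H1) as [u [Hu1 Hu2]].
    destruct (IHstar _ Hu1) as [v [? ?]].
    exists v; split; auto. econstructor; eauto. Qed.

Lemma beta_par : forall t t', beta t t' -> par t t'.
Proof. induction 1; constructor; auto using par_refl. Qed.

Lemma star_appl : forall a a' b, star beta a a' -> star beta (App a b) (App a' b).
Proof. induction 1; econstructor; eauto; constructor; auto. Qed.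
Lemma star_appr : forall a b b', star beta b b' -> star beta (App a b) (App a b').
Proof. induction 1; econstructor; eauto; constructor; auto. Qed.
Lemma star_lam : forall a a', star beta a a' -> star beta (Lam a) (Lam a').
Proof. induction 1; econstructor; eauto; constructor; auto. Qed.

Lemma par_star : forall t t', par t t' -> star beta t t'.
Proof. induction 1.
  - constructor.
  - eapply star_trans. apply star_appl; eauto. apply star_appr; eauto.
  - apply star_lam; auto.
  - eapply star_trans. apply star_appl. apply star_lam; eauto.
    eapply star_trans. apply star_appr; eauto.
    econstructor. constructor. constructor. Qed.

Lemma starpar_star : forall t t', star par t t' -> star beta t t'.
Proof. induction 1. constructor. eapply star_trans; eauto using par_star. Qed.
Lemma star_starpar : forall t t', star beta t t' -> star par t t'.
Proof. induction 1. constructor. econstructor; eauto using beta_par. Qed.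

Lemma beta_confl : forall t t1 t2, star beta t t1 -> star beta t t2 ->
  exists t3, star beta t1 t3 /\ star beta t2 t3.
Proof. intros. destruct (par_confl t t1 (star_starpar _ _ H) t2 (star_starpar _ _ H0))
  as [x [? ?]]. exists x; split; apply starpar_star; auto. Qed.

Lemma conv_common : forall x y, beta_conv x y ->
  exists z, star beta x z /\ star beta y z.
Proof. induction 1.
  - exists y; split; [econstructor; eauto; constructor | constructor].
  - exists x; split; constructor.
  - destruct IHclos_refl_sym_trans as [z [? ?]]; eauto.
  - destruct IHclos_refl_sym_trans1 as [a [? ?]].
    destruct IHclos_refl_sym_trans2 as [b [? ?]].
    destruct (beta_confl y a b) as [c [? ?]]; auto.
    exists c; split; eapply star_trans; eauto. Qed.

Ltac inv_beta := repeat match goal with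
  | H : beta (Var _) _ |- _ => inversion H
  | H : beta (App _ _) _ |- _ => inversion H; subst; clear H
  | H : beta (Lam _) _ |- _ => inversion H; subst; clear H
  end.

Inductive E0 : term -> Prop :=
| e0_oo : E0 (App omega_f omega_f)
| e0_sp t : E0 t -> E0 (App (Var 0) t).

Lemma E0_beta : forall t, E0 t -> forall t', beta t t' -> E0 t'.
Proof. induction 1; intros t' H'.
  - unfold omega_f in H'. inv_beta. simpl. apply e0_sp, e0_oo.
  - inversion H'; subst. inversion H3. constructor; auto. Qed.

Lemma E0_lift : forall t, E0 t -> forall d c, lift d (S c) t = t.
Proof. induction 1; intros; simpl; auto. rewrite IHE0; auto. Qed.

Lemma E0_subst : forall t, E0 t -> forall k v, subst (S k) v t = t.
Proof. induction 1; intros; simpl; auto. rewrite IHE0; auto. Qed.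

Definition wL := Lam (App (App (Var 2) (Var 1)) (App (Var 0) (Var 0))).

Inductive LN : term -> Prop :=
| ln_sp N : LN N -> LN (App (App (Var 1) (Var 0)) N)
| ln_oo : LN (App wL wL)
| ln_y t : E0 t -> LN (App (Lam t) (App (Var 1) (Var 0))).

Lemma E0_LN : forall t, E0 t -> LN (subst 0 (App (Var 1) (Var 0)) t).
Proof. induction 1; simpl. apply ln_oo. apply ln_sp; auto. Qed.

Lemma LN_beta : forall N, LN N -> forall N', beta N N' -> LN N'.
Proof. induction 1; intros N' H'.
  - inversion H'; subst; inv_beta. constructor; auto.
  - unfold wL in H'. inv_beta. simpl. apply ln_sp, ln_oo.
  - inversion H'; subst; inv_beta.
    all: first [apply E0_LN; auto | constructor; eapply E0_beta; eauto]. Qed.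

Inductive Lset : term -> Prop :=
| l1 t : E0 t -> Lset (App Bc (Lam t))
| l2 N : LN N -> Lset (Lam (Lam N)).

Lemma Lset_beta : forall t, Lset t -> forall t', beta t t' -> Lset t'.
Proof. induction 1; intros t' H'.
  - inversion H'; subst.
    + simpl. rewrite E0_lift; auto. apply l2, ln_y; auto.
    + match goal with Hb: beta Bc _ |- _ => unfold Bc in Hb; inv_beta end.
    + match goal with Hb : beta (Lam t) _ |- _ => inversion Hb; subst end.
      constructor. eapply E0_beta; eauto.
  - inv_beta. constructor. eapply LN_beta; eauto. Qed.

Definition Szt i := Lam (Lam (App (App (Var (S (S i))) (Var 0)) (App (Var 1) (Var 0)))).
Inductive FS (i : nat) : term -> Prop :=
| fs1 : FS i (App Sc (Var i))
| fs2 : FS i (Szt i).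
Definition Om2 i := Lam (Lam (App (App (Var (S (S i))) (Var 0)) (App (App (Var 1) (Var 1)) (Var 0)))).
Inductive OM (i : nat) : term -> Prop :=
| om1 F : FS (S i) F -> OM i (Lam (App F (App (Var 0) (Var 0))))
| om2 : OM i (Om2 i).

Inductive RT : nat -> term -> Prop :=
| r_oo i w1 w2 : OM i w1 -> OM i w2 -> RT i (App w1 w2)
| r_sp i F t : FS i F -> RT i t -> RT i (App F t)
| r_y i t F : E0 t -> FS i F -> RT i (App (Lam t) F)
| r_lam i b : CH (S i) b -> RT i (Lam b)
with CH : nat -> term -> Prop :=
| c_end j U : RT j U -> CH j (App U (Var 0))
| c_sp j b : CH j b -> CH j (App (App (Var j) (Var 0)) b).

Scheme RT_ind2 := Induction for RT Sort Prop
with CH_ind2 := Induction for CH Sort Prop.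
Combined Scheme RT_CH_ind from RT_ind2, CH_ind2.

Lemma FS_beta : forall i F F', FS i F -> beta F F' -> FS i F'.
Proof. intros i F F' H H'. destruct H.
  - inversion H'; subst.
    + simpl. replace (i + 2) with (S (S i)) by lia. apply fs2.
    + unfold Sc in *; inv_beta.
    + inv_beta.
  - unfold Szt in H'; inv_beta. Qed.

Lemma OM_beta : forall i w w', OM i w -> beta w w' -> OM i w'.
Proof. intros i w w' H H'. destruct H.
  - inversion H'; subst. inversion H1; subst.
    + inversion H; subst. simpl. apply om2.
    + constructor. eapply FS_beta; eauto.
    + inv_beta.
  - unfold Om2 in H'; inv_beta. Qed.

Ltac norm := unfold Szt, Om2, Sc in *; cbn [lift subst]; vcase; try lia; simpl;
  repeat (progress (rewrite ?Nat.add_1_r, ?Nat.sub_0_r; simpl)).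

Lemma FS_lift : forall i F c, FS i F -> c <= i -> FS (S i) (lift 1 c F).
Proof. intros i F c H Hc. destruct H; norm; constructor. Qed.

Lemma FS_subst : forall i F k v, FS (S i) F -> k <= i -> FS i (subst k v F).
Proof. intros i F k v H Hc. destruct H; norm; constructor. Qed.

Lemma OM_lift : forall i w c, OM i w -> c <= i -> OM (S i) (lift 1 c w).
Proof. intros i w c H Hc. destruct H; norm.
  - apply om1. apply FS_lift; auto; lia.
  - apply om2. Qed.

Lemma OM_subst : forall i w k v, OM (S i) w -> k <= i -> OM i (subst k v w).
Proof. intros i w k v H Hc. destruct H; norm.
  - apply om1. apply FS_subst; auto; lia.
  - apply om2. Qed.

Lemma E0_RT : forall t, E0 t -> forall i F, FS i F -> RT i (subst 0 F t).
Proof. induction 1; intros; simpl.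
  - apply r_oo; apply om1; apply FS_lift; auto; lia.
  - rewrite lift_0. apply r_sp; auto. Qed.

Lemma RT_CH_lift :
  (forall i t, RT i t -> forall c, c <= i -> RT (S i) (lift 1 c t)) /\
  (forall j b, CH j b -> forall c, 1 <= c -> c <= j -> CH (S j) (lift 1 c b)).
Proof.
  apply (RT_CH_ind (fun i t _ => forall c, c <= i -> RT (S i) (lift 1 c t))
                       (fun j b _ => forall c, 1 <= c -> c <= j -> CH (S j) (lift 1 c b)));
  intros; simpl.
  all: try (apply r_oo; apply OM_lift; auto; fail).
  all: try (apply r_sp; [apply FS_lift|]; auto; fail).
  - rewrite E0_lift; auto. apply r_y; auto. apply FS_lift; auto.
  - apply r_lam. apply H; lia.
  - vcase; try lia. apply c_end. apply H; lia.
  - vcase; try lia. rewrite Nat.add_1_r. apply c_sp. apply H; lia.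
  all: apply r_oo; apply OM_lift; auto.
Qed.

Lemma RT_CH_subst :
  (forall n t, RT n t -> forall i k v, n = S i -> k <= i -> RT i (subst k v t)) /\
  (forall n b, CH n b -> forall j k v, n = S j -> k <= j -> subst k v (Var 0) = Var 0 ->
     CH j (subst k v b)).
Proof.
  apply (RT_CH_ind (fun n t _ => forall i k v, n = S i -> k <= i -> RT i (subst k v t))
    (fun n b _ => forall j k v, n = S j -> k <= j -> subst k v (Var 0) = Var 0 ->
       CH j (subst k v b))); intros; subst; cbn [subst].
  - apply r_oo; apply OM_subst; auto.
  - apply r_sp; [apply FS_subst|]; auto.
  - rewrite E0_subst; auto. apply r_y; auto. apply FS_subst; auto.
  - apply r_lam. apply H; auto; lia.
  - match goal with Hs : subst _ _ (Var 0) = _ |- _ => cbn [subst] in Hs; rewrite Hs end.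
    apply c_end. eapply H; eauto.
  - match goal with Hs : subst _ _ (Var 0) = _ |- _ => cbn [subst] in Hs; rewrite Hs end.
    vcase; try lia. replace (S j0 - 1) with j0 by lia. apply c_sp. eapply H; eauto.
Qed.

Lemma RT_CH_beta : forall t t', beta t t' ->
  (forall i, RT i t -> RT i t') /\ (forall j, CH j t -> CH j t').
Proof.
  induction 1 as [a u|a a' b Hab IH|a b b' Hbb IH|a a' Haa IH]; split; intros n Hn.
  - inversion Hn; subst.
    + match goal with Hw : OM _ (Lam a) |- _ => inversion Hw; subst end.
      * simpl. rewrite lift_0. apply r_sp; [apply FS_subst; auto; lia | apply r_oo; auto].
      * simpl. apply r_lam. apply c_sp. apply c_end. apply r_oo; apply OM_lift; auto; lia.
    + match goal with Hw : FS _ (Lam a) |- _ => inversion Hw; subst end.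
      simpl. apply r_lam. apply c_sp. apply c_end. apply (proj1 RT_CH_lift); auto; lia.
    + apply E0_RT; auto.
  - inversion Hn; subst.
    match goal with Hw : RT _ (Lam a) |- _ => inversion Hw; subst end.
    eapply (proj2 RT_CH_subst); eauto; lia.
  - inversion Hn; subst.
    + apply r_oo; [eapply OM_beta; [|exact Hab]; eassumption | assumption].
    + apply r_sp; [eapply FS_beta; [|exact Hab]; eassumption | assumption].
    + inversion Hab; subst. apply r_y; [eapply E0_beta; eassumption | assumption].
  - inversion Hn; subst.
    + apply c_end. apply (proj1 IH); auto.
    + inv_beta.
  - inversion Hn; subst.
    + apply r_oo; [assumption | eapply OM_beta; [|exact Hbb]; eassumption].
    + apply r_sp; [assumption | apply (proj1 IH); auto].
    + apply r_y; [assumption | eapply FS_beta; [|exact Hbb]; eassumption].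
  - inversion Hn; subst.
    + inv_beta.
    + apply c_sp. apply (proj2 IH); auto.
  - inversion Hn; subst. apply r_lam. apply (proj2 IH); auto.
  - inversion Hn.
Qed.

Lemma LN_RT : forall N, LN N -> RT 0 (subst 1 Sc N).
Proof. induction 1; simpl.
  - apply r_sp; auto. apply fs1.
  - apply r_oo; apply om1; apply fs1.
  - rewrite E0_subst; auto. apply r_y; auto. apply fs1. Qed.

Inductive Rset : term -> Prop :=
| rr1 X : Lset X -> Rset (App X Sc)
| rr2 T : RT 0 T -> Rset (Lam T).

Lemma Rset_beta : forall t, Rset t -> forall t', beta t t' -> Rset t'.
Proof. induction 1; intros t' H'.
  - inversion H'; subst.
    + inversion H; subst. simpl. apply rr2. apply LN_RT; auto.
    + apply rr1. eapply Lset_beta; eauto.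
    + unfold Sc in *; inv_beta.
  - inversion H'; subst. apply rr2. apply (proj1 (RT_CH_beta _ _ H1)); auto. Qed.

Lemma CH_LN : forall j N, CH j N -> LN N -> False.
Proof. induction 1; intros HL; inversion HL; subst; auto.
  inversion H1. Qed.

Lemma disjoint : forall t, Lset t -> Rset t -> False.
Proof. intros t HL HR. destruct HL.
  - inversion HR; subst. unfold Sc in *. inversion H; subst; discriminate.
  - inversion HR; subst. inversion H1; subst. eapply CH_LN; eauto. Qed.

Lemma star_closed (P : term -> Prop) :
  (forall t t', P t -> beta t t' -> P t') -> forall t t', star beta t t' -> P t -> P t'.
Proof. intros HP t t' H. induction H; eauto. Qed.

Theorem proposition3p5 :
  ~ beta_conv (App Bc Y0) (App (App Bc Y0) Sc).
Proof.
  intro H. destruct (conv_common _ _ H) as [z [H1 H2]].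
  apply (disjoint z).
  - eapply star_closed; [ | exact H1 | ]. intros; eapply Lset_beta; eauto.
    apply l1. apply e0_oo.
  - eapply star_closed; [ | exact H2 | ]. intros; eapply Rset_beta; eauto.
    apply rr1. apply l1. apply e0_oo.
Qed.
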